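(* Let $V$ be a graded generalized Eulerian $A_n(K)$-module and let $1\le r\le n$. Then: (1) for all $\nu\ge0$, $H^\nu(\partial_r,\partial_{r+1},\dots,\partial_n;V)(-n+r-1)$ is a generalized Eulerian $A_{r-1}(K)$-module; (2) for all $\nu\ge0$, $H^\nu(X_r,\dots,X_n;V)$ is a generalized Eulerian $A_{r-1}(K)$-module; (3) for all $\nu\ge0$, $H^\nu(X_1,\dots,X_{r-1},\partial_r,\partial_{r+1},\dots,\partial_n;V)$ is a graded $K$-vector space concentrated in degree $-n+r-1$.
   Context: Let $K$ be a field of characteristic zero, $R=K[X_1,\dots,X_n]$ with standard grading. $A_n(K)=K\langle X_1,\dots,X_n,\partial_1,\dots,\partial_n\rangle$ is the $n$-th Weyl algebra ($\partial_iX_j-X_j\partial_i=\delta_{ij}$), graded by $\deg X_i=1$, $\deg\partial_i=-1$. The Euler operator is $\mathcal E_n=\sum_{i=1}^nX_i\partial_i$; $|z|$ denotes the degree of a homogeneous $z$. A graded left $A_n(K)$-module $M$ is generalized Eulerian if for every homogeneous $z\in M$ there is $a\ge1$ with $(\mathcal E_n-|z|)^az=0$. For $m\le n$, $A_m(K)=K\langle X_1,\dots,X_m,\partial_1,\dots,\partial_m\rangle\subseteq A_n(K)$ with Euler operator $\mathcal E_m=\sum_{i\le m}X_i\partial_i$, and ''generalized Eulerian $A_m(K)$-module'' is defined with $\mathcal E_m$; for $m=0$, $A_0(K)=K$, $\mathcal E_0=0$, and a graded vector space is generalized Eulerian iff it is concentrated in degree $0$. $M(l)_j=M_{j+l}$.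 Koszul (co)homology: for pairwise commuting homogeneous $u_1,\dots,u_\ell\in A_n(K)$ and a graded left $A_n(K)$-module $V$, the Koszul complex has $K_p=\bigoplus_{i_1<\dots<i_p}V(-(\deg u_{i_1}+\dots+\deg u_{i_p}))$ with the usual Koszul differentials (left multiplication by the $u_i$ with signs), homogeneous of degree $0$, so $H_0(u;V)=V/\sum u_iV$ with the grading of $V$. $H_p(u_1,\dots,u_\ell;V)$ denotes its homology and $H^\nu(u_1,\dots,u_\ell;V):=H_{\ell-\nu}(u_1,\dots,u_\ell;V)$. Elements of $A_n(K)$ commuting with all $u_i$ act on these; in particular $H^\nu(\partial_r,\dots,\partial_n;V)$ and $H^\nu(X_r,\dots,X_n;V)$ are graded $A_{r-1}(K)$-modules. *)

(* Defs.v *)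
From HB Require Import structures.
From mathcomp Require Import all_boot all_order all_algebra.
Set Implicit Arguments. Unset Strict Implicit. Unset Printing Implicit Defensive.
Import Order.TTheory GRing.Theory Num.Theory.
Local Open Scope ring_scope.

(* A Z-graded K-vector space: V is the internal direct sum of the subspaces
   [hom j] (elements homogeneous of degree j). *)
Definition graded_vs (K : fieldType) (V : lmodType K) (hom : int -> pred V) : Prop :=
  [/\ (forall j, 0 \in hom j),
      (forall j (a : K) (u v : V), u \in hom j -> v \in hom j -> a *: u + v \in hom j),
      (forall v : V, exists (s : seq int) (f : int -> V),
          (forall j, f j \in hom j) /\ v = \sum_(j <- s) f j) &
      (forall (s : seq int) (f : int -> V), uniq s -> (forall j, f j \in hom j) ->
          \sum_(j <- s) f j = 0 -> forall j, j \in s -> f j = 0)].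

(* A graded left A_n(K)-module: a graded K-vector space V with K-linear operators
   X i, D i (i : 'I_n; X i stands for X_{i+1}, D i for the partial derivative
   d_{i+1}) satisfying the defining relations of the Weyl algebra, with
   deg X_i = 1 and deg d_i = -1. *)
Definition graded_weyl_module (K : fieldType) (n : nat) (V : lmodType K)
    (hom : int -> pred V) (X D : 'I_n -> V -> V) : Prop :=
  graded_vs hom /\
  (forall i (a : K) (u v : V), X i (a *: u + v) = a *: X i u + X i v) /\
  (forall i (a : K) (u v : V), D i (a *: u + v) = a *: D i u + D i v) /\
  (forall i j v, X i (X j v) = X j (X i v)) /\
  (forall i j v, D i (D j v) = D j (D i v)) /\
  (forall i j v, D i (X j v) - X j (D i v) = (i == j)%:R *: v) /\
  (forall i j v, v \in hom j -> X i v \in hom (j + 1) /\ D i v \in hom (j - 1)).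

(* Euler operator E_m = sum_{i <= m} X_i d_i (0-based: indices i < m). *)
Definition euler (K : fieldType) (n : nat) (V : lmodType K) (X D : 'I_n -> V -> V)
    (m : nat) (v : V) : V :=
  \sum_(i < n | (i < m)%N) X i (D i v).

Definition shifted_pow (K : fieldType) (V : lmodType K) (T : V -> V) (c : int)
    (a : nat) (v : V) : V :=
  iter a (fun w => T w - c%:~R *: w) v.

Definition gen_eulerian (K : fieldType) (n : nat) (V : lmodType K)
    (hom : int -> pred V) (X D : 'I_n -> V -> V) : Prop :=
  forall (j : int) (v : V), v \in hom j ->
    exists a : nat, (0 < a)%N /\ shifted_pow (euler X D n) j a v = 0.

(* ---- Koszul complex of pairwise commuting operators u_i, i in S ⊆ 'I_n ----
   A chain is a function f : {set 'I_n} -> V, f I being the coefficient of e_I;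
   it must be supported on subsets I of S. The differential is
   d(e_I ⊗ v) = sum_{i in I} (-1)^{#{k in I, k < i}} e_{I\{i}} ⊗ u_i v.
   Cohomological degree nu corresponds to homological degree #|S| - nu,
   i.e. to subsets I with #|I| + nu = #|S|. *)
Definition kdiff (K : fieldType) (n : nat) (V : lmodType K) (u : 'I_n -> V -> V)
    (S : {set 'I_n}) (f : {set 'I_n} -> V) (J : {set 'I_n}) : V :=
  \sum_(i in S :\: J) ((-1 : K) ^+ #|[set k in J | (k < i)%N]|) *: u i (f (i |: J)).

Definition kcochain (K : fieldType) (n : nat) (V : lmodType K)
    (S : {set 'I_n}) (nu : nat) (f : {set 'I_n} -> V) : Prop :=
  forall I, f I != 0 -> (I \subset S) /\ (#|I| + nu = #|S|)%N.

Definition kcycle (K : fieldType) (n : nat) (V : lmodType K) (u : 'I_n -> V -> V)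
    (S : {set 'I_n}) (nu : nat) (f : {set 'I_n} -> V) : Prop :=
  kcochain S nu f /\ forall J, kdiff u S f J = 0.

Definition kboundary (K : fieldType) (n : nat) (V : lmodType K) (u : 'I_n -> V -> V)
    (S : {set 'I_n}) (nu : nat) (f : {set 'I_n} -> V) : Prop :=
  exists g : {set 'I_n} -> V,
    (forall I, g I != 0 -> (I \subset S) /\ (#|I| + nu = #|S|.+1)%N) /\
    (forall J, f J = kdiff u S g J).

(* f is homogeneous of degree d in the graded Koszul complex: the summand
   indexed by I is V(-(sum_{i in I} deg u_i)), so f I must have degree
   d - sum_{i in I} deg u_i in V. *)
Definition khom (K : fieldType) (n : nat) (V : lmodType K) (hom : int -> pred V)
    (du : 'I_n -> int) (d : int) (f : {set 'I_n} -> V) : Prop :=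
  forall I, f I \in hom (d - \sum_(i in I) du i).

(* H^nu(u_i, i in S; V)(shift) is a generalized Eulerian module for the
   operator E (acting componentwise): every homogeneous class [f] of degree
   d in H^nu (hence of degree d + shift in the shifted module) satisfies
   (E - (d + shift))^a [f] = 0 for some a >= 1, i.e. the representative
   (E - (d+shift))^a f is a boundary. *)
Definition koszul_gen_eulerian (K : fieldType) (n : nat) (V : lmodType K)
    (hom : int -> pred V) (u : 'I_n -> V -> V) (du : 'I_n -> int)
    (S : {set 'I_n}) (E : V -> V) (shift : int) : Prop :=
  forall (nu : nat) (d : int) (f : {set 'I_n} -> V),
    kcycle u S nu f -> khom hom du d f ->
    exists a : nat, (0 < a)%N /\
      kboundary u S nu (fun I => shifted_pow E (d + shift) a (f I)).

Definition koszul_concentrated (K : fieldType) (n : nat) (V : lmodType K)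
    (hom : int -> pred V) (u : 'I_n -> V -> V) (du : 'I_n -> int)
    (S : {set 'I_n}) (d0 : int) : Prop :=
  forall (nu : nat) (d : int) (f : {set 'I_n} -> V),
    kcycle u S nu f -> khom hom du d f -> d != d0 -> kboundary u S nu f.

(* Main.v *)
Require Import Defs.
From HB Require Import structures.
From mathcomp Require Import all_boot all_order all_algebra.
From mathcomp Require Import ring zify.
Import Order.TTheory GRing.Theory Num.Theory.
Set Implicit Arguments. Unset Strict Implicit. Unset Printing Implicit Defensive.
Local Open Scope ring_scope.

Definition lin (K : fieldType) (V : lmodType K) (T : V -> V) :=
  forall (a : K) (u v : V), T (a *: u + v) = a *: T u + T v.

Lemma lin0 (K : fieldType) (V : lmodType K) (T : V -> V) : lin T -> T 0 = 0.
Proof.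
by move=> H; have := H 1 0 0; rewrite !scale1r addr0 => e; apply: (addrI (T 0)); rewrite addr0 -e; done.
Qed.

Lemma linD (K : fieldType) (V : lmodType K) (T : V -> V) u v : lin T -> T (u + v) = T u + T v.
Proof. by move=> H; have := H 1 u v; rewrite !scale1r. Qed.

Lemma linZ (K : fieldType) (V : lmodType K) (T : V -> V) a u : lin T -> T (a *: u) = a *: T u.
Proof. by move=> H; rewrite -[a *: u]addr0 H (lin0 H) addr0. Qed.

Lemma linN (K : fieldType) (V : lmodType K) (T : V -> V) u : lin T -> T (- u) = - T u.
Proof. by move=> H; rewrite -scaleN1r linZ // scaleN1r. Qed.

Lemma linB (K : fieldType) (V : lmodType K) (T : V -> V) u v : lin T -> T (u - v) = T u - T v.
Proof. by move=> H; rewrite linD // linN. Qed.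

Lemma lin_sum (K : fieldType) (V : lmodType K) (T : V -> V) (I : Type) (s : seq I) (P : pred I) (F : I -> V) :
  lin T -> T (\sum_(i <- s | P i) F i) = \sum_(i <- s | P i) T (F i).
Proof. by move=> H; apply: (big_morph T (fun u v => linD u v H) (lin0 H)). Qed.

Lemma lin_iter (K : fieldType) (V : lmodType K) (T : V -> V) k : lin T -> lin (iter k T).
Proof. move=> H; elim: k => [|k IH] a u v //=; by rewrite IH H. Qed.

Lemma iter0 (K : fieldType) (V : lmodType K) (T : V -> V) k : lin T -> iter k T 0 = 0.
Proof. move=> H; elim: k => //= k ->; exact: lin0. Qed.

Definition eps (K : fieldType) (n : nat) (J : {set 'I_n}) (i : 'I_n) : K :=
  (-1 : K) ^+ #|[set k in J | (k < i)%N]|.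
Arguments eps K {n} J i.

Lemma eps_sq (K : fieldType) (n : nat) (J : {set 'I_n}) (i : 'I_n) : eps K J i * eps K J i = 1.
Proof. by rewrite /eps -exprD addnn -mul2n exprM sqrrN !expr1n. Qed.

Lemma eps_U1 (K : fieldType) (n : nat) (J : {set 'I_n}) (x i : 'I_n) : x \notin J ->
  eps K (x |: J) i = (if (x < i)%N then -1 else 1) * eps K J i.
Proof.
move=> xJ; rewrite /eps; case: ifP => xi.
  have -> : [set k in x |: J | (k < i)%N] = x |: [set k in J | (k < i)%N].
    by apply/setP => k; rewrite !inE; case: eqP => // ->; rewrite xi.
  by rewrite cardsU1 !inE (negbTE xJ) /= exprS.
have -> : [set k in x |: J | (k < i)%N] = [set k in J | (k < i)%N].
  by apply/setP => k; rewrite !inE; case: eqP => // ->; rewrite xi (negbTE xJ).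
by rewrite mul1r.
Qed.

Lemma eps_swap (K : fieldType) (n : nat) (J : {set 'I_n}) (i j : 'I_n) : i \in J -> j \notin J ->
  eps K J j * eps K ((j |: J) :\ i) i = - (eps K (J :\ i) i * eps K (J :\ i) j).
Proof.
move=> iJ jJ.
have ij : i != j by apply: contraNneq jJ => <-.
have iJ0 : i \notin J :\ i by rewrite !inE eqxx.
have jJ0 : j \notin J :\ i by rewrite !inE (negbTE jJ) andbF.
have -> : J = i |: (J :\ i) by rewrite setD1K.
have -> : (j |: (i |: J :\ i)) :\ i = j |: (J :\ i).
  by apply/setP => k; rewrite !inE; case: (k =P i) => [->|]; rewrite ?(negbTE ij) ?eqxx //= andbF.
rewrite setU1K // !eps_U1 //.
case: (ltngtP i j) => [ij'|ji'|/val_inj e]; last by rewrite e eqxx in ij.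
  by rewrite !(mulN1r, mul1r, mulNr, mulrN) mulrC.
by rewrite !(mulN1r, mul1r, mulNr, mulrN) mulrC.
Qed.

Definition hmap (K : fieldType) (n : nat) (V : lmodType K) (w : 'I_n -> V -> V)
  (S : {set 'I_n}) (g : {set 'I_n} -> V) (I : {set 'I_n}) : V :=
  \sum_(i in I :&: S) eps K (I :\ i) i *: w i (g (I :\ i)).

Lemma homotopy (K : fieldType) (n : nat) (V : lmodType K) (u w : 'I_n -> V -> V)
  (S : {set 'I_n}) :
  (forall i, lin (u i)) -> (forall i, lin (w i)) ->
  (forall i j v, i \in S -> j \in S -> i != j -> w i (u j v) = u j (w i v)) ->
  forall g J, kdiff u S (hmap w S g) J + hmap w S (kdiff u S g) J =
    \sum_(i in S :\: J) u i (w i (g J)) + \sum_(i in J :&: S) w i (u i (g J)).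
Proof.
move=> lu lw com g J; rewrite /kdiff /hmap.
have E1 : forall j, j \in S :\: J ->
   eps K J j *: u j (\sum_(i in (j |: J) :&: S) eps K ((j |: J) :\ i) i *: w i (g ((j |: J) :\ i)))
   = u j (w j (g J)) + \sum_(i in J :&: S)
       (eps K J j * eps K ((j |: J) :\ i) i) *: u j (w i (g ((j |: J) :\ i))).
  move=> j; rewrite inE => /andP [jJ jS].
  rewrite (bigD1 j) /=; last by rewrite !inE eqxx jS.
  rewrite setU1K // linD // linZ // scalerDr scalerA eps_sq scale1r; congr (_ + _).
  rewrite lin_sum // scaler_sumr.
  apply: eq_big => [i|i _]; last by rewrite linZ // scalerA.
  rewrite !inE; case: (i =P j) => [->|/eqP ne]; first by rewrite (negbTE jJ) andbF.
  by rewrite andbT.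
have E2 : forall i, i \in J :&: S ->
   eps K (J :\ i) i *: w i (\sum_(j in S :\: (J :\ i)) eps K (J :\ i) j *: u j (g (j |: (J :\ i))))
   = w i (u i (g J)) + \sum_(j in S :\: J)
       (eps K (J :\ i) i * eps K (J :\ i) j) *: w i (u j (g (j |: (J :\ i)))).
  move=> i; rewrite inE => /andP [iJ iS].
  rewrite (bigD1 i) /=; last by rewrite !inE eqxx iS andbT.
  rewrite setD1K // linD // linZ // scalerDr scalerA eps_sq scale1r; congr (_ + _).
  rewrite lin_sum // scaler_sumr.
  apply: eq_big => [j|j _]; last by rewrite linZ // scalerA.
  rewrite !inE; case: (j =P i) => [->|/eqP ne]; first by rewrite /= iJ andbF.
  by rewrite andbT.
rewrite (eq_bigr _ E1) (eq_bigr _ E2) !big_split /=.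
rewrite -!addrA; congr (_ + _); rewrite addrCA; rewrite -[RHS]addr0; congr (_ + _).
rewrite [in X in _ + X = _]exchange_big -big_split /= big1 // => j jSJ.
rewrite -big_split /= big1 // => i iJS.
move: jSJ iJS; rewrite !inE => /andP[jJ jS] /andP[iJ iS].
have ij : i != j by apply: contraNneq jJ => <-.
rewrite eps_swap //.
have -> : (j |: J) :\ i = j |: (J :\ i).
  apply/setP => k; rewrite !inE; case: (k =P i) => [->|] //=.
  by rewrite (negbTE ij).
rewrite com // scaleNr addNr //.
Qed.

Lemma kdiff_lin (K : fieldType) (n : nat) (V : lmodType K) (u : 'I_n -> V -> V)
  (S : {set 'I_n}) (a : K) (f g : {set 'I_n} -> V) J :
  (forall i, lin (u i)) ->
  kdiff u S (fun I => a *: f I + g I) J = a *: kdiff u S f J + kdiff u S g J.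
Proof.
move=> lu; rewrite /kdiff scaler_sumr -big_split /=; apply: eq_bigr => i _.
by rewrite lu scalerDr !scalerA mulrC.
Qed.

Lemma kdiff0 (K : fieldType) (n : nat) (V : lmodType K) (u : 'I_n -> V -> V)
  (S : {set 'I_n}) J : (forall i, lin (u i)) -> kdiff u S (fun _ => 0) J = 0.
Proof. by move=> lu; rewrite /kdiff big1 // => i _; rewrite lin0 // scaler0. Qed.

Lemma bnd_ext (K : fieldType) (n : nat) (V : lmodType K) (u : 'I_n -> V -> V)
  (S : {set 'I_n}) nu (f f' : {set 'I_n} -> V) :
  (forall I, f I = f' I) -> kboundary u S nu f -> kboundary u S nu f'.
Proof. by move=> e [g [H1 H2]]; exists g; split => // J; rewrite -e. Qed.

Lemma bnd_lin (K : fieldType) (n : nat) (V : lmodType K) (u : 'I_n -> V -> V)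
  (S : {set 'I_n}) nu (a : K) (f f' : {set 'I_n} -> V) :
  (forall i, lin (u i)) ->
  kboundary u S nu f -> kboundary u S nu f' -> kboundary u S nu (fun I => a *: f I + f' I).
Proof.
move=> lu [g [g1 g2]] [g' [g1' g2']]; exists (fun I => a *: g I + g' I); split.
  move=> I nz; case: (eqVneq (g I) 0) => [e|]; last exact: g1.
  by apply: g1'; apply: contraNneq nz => e'; rewrite e e' scaler0 addr0.
by move=> J; rewrite kdiff_lin // g2 g2'.
Qed.

Lemma bnd0 (K : fieldType) (n : nat) (V : lmodType K) (u : 'I_n -> V -> V)
  (S : {set 'I_n}) nu : (forall i, lin (u i)) -> kboundary u S nu (fun _ => 0).
Proof.
move=> lu; exists (fun _ => 0); split; first by move=> I; rewrite eqxx.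
by move=> J; rewrite kdiff0.
Qed.

Definition chainmap (K : fieldType) (n : nat) (V : lmodType K) (u : 'I_n -> V -> V)
  (S : {set 'I_n}) (T : {set 'I_n} -> V -> V) :=
  (forall I, lin (T I)) /\
  (forall J i v, i \in S :\: J -> T J (u i v) = u i (T (i |: J) v)).

Lemma kdiff_app (K : fieldType) (n : nat) (V : lmodType K) (u : 'I_n -> V -> V)
  (S : {set 'I_n}) (T : {set 'I_n} -> V -> V) f J :
  (forall i, lin (u i)) -> chainmap u S T ->
  kdiff u S (fun I => T I (f I)) J = T J (kdiff u S f J).
Proof.
move=> lu [lT cT]; rewrite /kdiff lin_sum //; apply: eq_bigr => i iS.
by rewrite linZ // cT.
Qed.

Lemma cycle_app (K : fieldType) (n : nat) (V : lmodType K) (u : 'I_n -> V -> V)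
  (S : {set 'I_n}) (T : {set 'I_n} -> V -> V) nu f :
  (forall i, lin (u i)) -> chainmap u S T ->
  kcycle u S nu f -> kcycle u S nu (fun I => T I (f I)).
Proof.
move=> lu cT [c1 c2]; split.
  move=> I nz; apply: c1; apply: contraNneq nz => ->; by rewrite (lin0 (cT.1 I)).
by move=> J; rewrite kdiff_app // c2 (lin0 (cT.1 J)).
Qed.

Lemma bnd_app (K : fieldType) (n : nat) (V : lmodType K) (u : 'I_n -> V -> V)
  (S : {set 'I_n}) (T : {set 'I_n} -> V -> V) nu f :
  (forall i, lin (u i)) -> chainmap u S T ->
  kboundary u S nu f -> kboundary u S nu (fun I => T I (f I)).
Proof.
move=> lu cT [g [g1 g2]]; exists (fun I => T I (g I)); split.
  move=> I nz; apply: g1; apply: contraNneq nz => ->; by rewrite (lin0 (cT.1 I)).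
by move=> J; rewrite kdiff_app // g2.
Qed.

Definition Pop (K : fieldType) (n : nat) (V : lmodType K) (u w : 'I_n -> V -> V)
  (S : {set 'I_n}) (J : {set 'I_n}) (v : V) : V :=
  \sum_(i in S :\: J) u i (w i v) + \sum_(i in J :&: S) w i (u i v).

Lemma Pop_lin (K : fieldType) (n : nat) (V : lmodType K) (u w : 'I_n -> V -> V)
  (S : {set 'I_n}) J :
  (forall i, lin (u i)) -> (forall i, lin (w i)) -> lin (Pop u w S J).
Proof.
move=> lu lw a x y; rewrite /Pop scalerDr !scaler_sumr addrACA -!big_split /=.
by congr (_ + _); apply: eq_bigr => i _; rewrite ?lw ?lu ?lw.
Qed.

Lemma bnd_P (K : fieldType) (n : nat) (V : lmodType K) (u w : 'I_n -> V -> V)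
  (S : {set 'I_n}) nu f :
  (forall i, lin (u i)) -> (forall i, lin (w i)) ->
  (forall i j v, i \in S -> j \in S -> i != j -> w i (u j v) = u j (w i v)) ->
  kcycle u S nu f -> kboundary u S nu (fun J => Pop u w S J (f J)).
Proof.
move=> lu lw com [c1 c2]; exists (hmap w S f); split; last first.
  move=> J; rewrite /Pop -(homotopy lu lw com f J) [X in _ + X]big1 ?addr0 // => i _.
  by rewrite c2 lin0 // scaler0.
move=> I; rewrite /hmap => nz.
case: (boolP [exists i, (i \in I :&: S) && (f (I :\ i) != 0)]); last first.
  rewrite negb_exists => /forallP H; case/eqP: nz; apply: big1 => i iIS.
  by have := H i; rewrite iIS /= negbK => /eqP ->; rewrite lin0 // scaler0.
case/existsP => i /andP [iIS /c1 [sub e]]; move: iIS; rewrite inE => /andP [iI iS].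
split.
  apply/subsetP => k kI; case: (k =P i) => [-> //|/eqP ne].
  by apply: (subsetP sub); rewrite !inE ne kI.
by rewrite (cardsD1 i I) iI add1n addSn e.
Qed.

Lemma key (K : fieldType) (n : nat) (V : lmodType K) (u w : 'I_n -> V -> V)
  (S : {set 'I_n}) nu (N T : {set 'I_n} -> V -> V) (f : {set 'I_n} -> V) :
  (forall i, lin (u i)) -> (forall i, lin (w i)) ->
  (forall i j v, i \in S -> j \in S -> i != j -> w i (u j v) = u j (w i v)) ->
  chainmap u S N -> chainmap u S T ->
  (forall (J : {set 'I_n}) v, J \subset S -> (#|J| + nu = #|S|)%N -> T J v = N J v - Pop u w S J v) ->
  kcycle u S nu f ->
  forall k, kboundary u S nu (fun J => iter k (T J) (f J) - iter k (N J) (f J)).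
Proof.
move=> lu lw com cN cT hTN cf.
have cyc : forall k, kcycle u S nu (fun J => iter k (N J) (f J)).
  by elim=> [|k IH] //; exact: (cycle_app lu cN IH).
elim=> [|k IH].
  by apply: (bnd_ext _ (bnd0 S nu lu)) => I /=; rewrite subrr.
have h1 := bnd_app lu cT IH.
have h2 := bnd_P lu lw com (cyc k).
have h3 := bnd_lin (-1) lu h2 h1.
apply: (bnd_ext _ h3) => I /=.
set a := iter k (T I) (f I); set b := iter k (N I) (f I).
have lTI := cT.1 I; have lNI := cN.1 I.
case: (eqVneq b 0) => [->|nz].
  by rewrite (lin0 (Pop_lin S I lu lw)) scaler0 add0r subr0 lin0 // subr0.
have [sub e] := (cyc k).1 I nz.
rewrite linB // (hTN I b sub e) scaleN1r.
by rewrite opprB addrCA addKr.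
Qed.

Lemma card_lt (n m : nat) : (m <= n)%N -> #|[set i : 'I_n | (i < m)%N]| = m.
Proof.
move=> mn; rewrite -sum1_card (eq_bigl (fun i : 'I_n => (i < m)%N)); last by move=> i; rewrite inE.
by rewrite -(big_ord_widen n (fun _ => 1%N) mn) sum1_card card_ord.
Qed.

Lemma card_ge (n m : nat) : (m <= n)%N -> #|[set i : 'I_n | (m <= i)%N]| = (n - m)%N.
Proof.
move=> mn; have := cardsC [set i : 'I_n | (i < m)%N]; rewrite card_lt // card_ord.
have -> : ~: [set i : 'I_n | (i < m)%N] = [set i : 'I_n | (m <= i)%N].
  by apply/setP => i; rewrite !inE ltnNge negbK.
by move=> e; apply: (@addnI m); rewrite e subnKC.
Qed.

Lemma euler_lin (K : fieldType) (n : nat) (V : lmodType K) (X D : 'I_n -> V -> V) m :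
  (forall i, lin (X i)) -> (forall i, lin (D i)) -> lin (euler X D m).
Proof.
move=> lX lD a x y; rewrite /euler scaler_sumr -big_split /=; apply: eq_bigr => i _.
by rewrite lD lX.
Qed.

Lemma euler_X (K : fieldType) (n : nat) (V : lmodType K) (X D : 'I_n -> V -> V) m i v :
  (forall i, lin (X i)) -> (forall i, lin (D i)) ->
  (forall i j v, X i (X j v) = X j (X i v)) ->
  (forall i j v, D i (X j v) - X j (D i v) = (i == j)%:R *: v) ->
  euler X D m (X i v) = X i (euler X D m v) + ((i < m)%N)%:R *: X i v.
Proof.
move=> lX lD XX DX; rewrite /euler lin_sum //.
have e : forall k, X k (D k (X i v)) = X i (X k (D k v)) + (k == i)%:R *: X k v.
  move=> k; have := DX k i v; move/eqP; rewrite subr_eq => /eqP ->.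
  by rewrite addrC linD // linZ // XX.
rewrite (eq_bigr _ (fun k _ => e k)) big_split /=; congr (_ + _).
case: (ltnP i m) => im.
  rewrite (bigD1 i) //= eqxx scale1r big1 ?addr0 // => k /andP [_ /negbTE ->].
  by rewrite scale0r.
rewrite big1 ?scale0r // => k km; case: (k =P i) => [e'|_]; last by rewrite scale0r.
by move: km; rewrite e' ltnNge im.
Qed.

Lemma euler_D (K : fieldType) (n : nat) (V : lmodType K) (X D : 'I_n -> V -> V) m i v :
  (forall i, lin (X i)) -> (forall i, lin (D i)) ->
  (forall i j v, D i (D j v) = D j (D i v)) ->
  (forall i j v, D i (X j v) - X j (D i v) = (i == j)%:R *: v) ->
  euler X D m (D i v) = D i (euler X D m v) - ((i < m)%N)%:R *: D i v.
Proof.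
move=> lX lD DD DX; rewrite /euler lin_sum //.
have e : forall k, X k (D k (D i v)) = D i (X k (D k v)) - (k == i)%:R *: D k v.
  move=> k; have := DX i k (D k v); rewrite DD eq_sym => <-.
  by rewrite opprB addrC subrK.
rewrite (eq_bigr _ (fun k _ => e k)) sumrB /=; congr (_ - _).
case: (ltnP i m) => im.
  rewrite (bigD1 i) //= eqxx scale1r big1 ?addr0 // => k /andP [_ /negbTE ->].
  by rewrite scale0r.
rewrite big1 ?scale0r // => k km; case: (k =P i) => [e'|_]; last by rewrite scale0r.
by move: km; rewrite e' ltnNge im.
Qed.

Lemma lin_sub_scal (K : fieldType) (V : lmodType K) (E : V -> V) (c : K) :
  lin E -> lin (fun w => E w - c *: w).
Proof.
move=> lE a x y /=; rewrite lE scalerDr scalerBr [c *: (a *: x)]scalerA mulrC -scalerA.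
by rewrite opprD addrACA.
Qed.

Lemma lin_scal (K : fieldType) (V : lmodType K) (c : K) : lin (fun w : V => c *: w).
Proof. by move=> a x y; rewrite scalerDr !scalerA mulrC. Qed.

Lemma chain_N (K : fieldType) (n : nat) (V : lmodType K) (u : 'I_n -> V -> V)
  (du : 'I_n -> int) (S : {set 'I_n}) (E : V -> V) (d : int) :
  (forall i, lin (u i)) -> lin E ->
  (forall i v, i \in S -> E (u i v) = u i (E v) + (du i)%:~R *: u i v) ->
  chainmap u S (fun J w => E w - (d - \sum_(i in J) du i)%:~R *: w).
Proof.
move=> lu lE hE; split; first by move=> I; apply: lin_sub_scal.
move=> J i v; rewrite inE => /andP [iJ iS].
rewrite hE // (linB _ _ (lu i)) (linZ _ _ (lu i)) big_setU1 //=.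
rewrite (_ : d - (du i + \sum_(j in J) du j) = (d - \sum_(j in J) du j) - du i); last by ring.
by rewrite [(_ - du i)%:~R]intrB scalerBl opprB addrA.
Qed.

Lemma chain_T (K : fieldType) (n : nat) (V : lmodType K) (u : 'I_n -> V -> V)
  (S : {set 'I_n}) (E : V -> V) (c : K) :
  (forall i, lin (u i)) -> lin E ->
  (forall i v, i \in S -> E (u i v) = u i (E v)) ->
  chainmap u S (fun _ w => E w - c *: w).
Proof.
move=> lu lE hE; split; first by move=> I; apply: lin_sub_scal.
move=> J i v; rewrite inE => /andP [iJ iS].
by rewrite hE // (linB _ _ (lu i)) (linZ _ _ (lu i)).
Qed.

Lemma chain_scal (K : fieldType) (n : nat) (V : lmodType K) (u : 'I_n -> V -> V)
  (S : {set 'I_n}) (c : K) :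
  (forall i, lin (u i)) -> chainmap u S (fun _ w => c *: w).
Proof.
move=> lu; split; first by move=> I; apply: lin_scal.
by move=> J i v _; rewrite linZ.
Qed.

Lemma alg1 (V : zmodType) (a b y z : V) : b - (y + z) = a - y - (a - b + z).
Proof. by rewrite !opprD opprK -!addrA [X in _ = a + X]addrCA addNKr addrCA. Qed.

Lemma euler_all (K : fieldType) (n : nat) (V : lmodType K) (X D : 'I_n -> V -> V) v :
  euler X D n v = \sum_(i < n) X i (D i v).
Proof. by rewrite /euler; apply: eq_bigl => i; rewrite ltn_ord. Qed.

Lemma euler_split (K : fieldType) (n : nat) (V : lmodType K) (X D : 'I_n -> V -> V) m v :
  euler X D n v = euler X D m v + \sum_(i in [set i : 'I_n | (m <= i)%N]) X i (D i v).
Proof.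
rewrite euler_all (bigID (fun i : 'I_n => (i < m)%N)) /=; congr (_ + _).
by apply: eq_bigl => i; rewrite inE ltnNge negbK.
Qed.

Lemma DXii (K : fieldType) (n : nat) (V : lmodType K) (X D : 'I_n -> V -> V) i v :
  (forall i j v, D i (X j v) - X j (D i v) = (i == j)%:R *: v) ->
  D i (X i v) = X i (D i v) + v.
Proof. by move=> DX; have := DX i i v; rewrite eqxx scale1r => /eqP; rewrite subr_eq addrC => /eqP. Qed.

Lemma Pop1 (K : fieldType) (n : nat) (V : lmodType K) (X D : 'I_n -> V -> V) m J v :
  (forall i j v, D i (X j v) - X j (D i v) = (i == j)%:R *: v) ->
  Pop D X [set i : 'I_n | (m <= i)%N] J v =
  (euler X D n v - euler X D m v) + (#|[set i : 'I_n | (m <= i)%N] :\: J|)%:R *: v.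
Proof.
move=> DX; rewrite /Pop (eq_bigr _ (fun i _ => DXii i v DX)) big_split /= sumr_const -scaler_nat.
rewrite (euler_split X D m v) [euler X D m v + _]addrC addrK (big_setID (A := [set i : 'I_n | (m <= i)%N]) J) setIC /=.
by rewrite addrAC [X in X + _ = _]addrC.
Qed.

Lemma Pop2 (K : fieldType) (n : nat) (V : lmodType K) (X D : 'I_n -> V -> V) m J v :
  (forall i j v, D i (X j v) - X j (D i v) = (i == j)%:R *: v) ->
  Pop X D [set i : 'I_n | (m <= i)%N] J v =
  (euler X D n v - euler X D m v) + (#|J :&: [set i : 'I_n | (m <= i)%N]|)%:R *: v.
Proof.
move=> DX; rewrite /Pop [X in _ + X](eq_bigr _ (fun i _ => DXii i v DX)) big_split /= sumr_const -scaler_nat.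
rewrite (euler_split X D m v) [euler X D m v + _]addrC addrK (big_setID (A := [set i : 'I_n | (m <= i)%N]) J) setIC /=.
by rewrite addrA [X in X + _ = _]addrC.
Qed.

Lemma intr_sum (K : fieldType) (I : Type) (s : seq I) (P : pred I) (F : I -> int) :
  (\sum_(i <- s | P i) F i)%:~R = \sum_(i <- s | P i) (F i)%:~R :> K.
Proof. by apply: (big_morph (fun x : int => x%:~R : K) (@intrD K) (mulr0z 1)). Qed.

Lemma sum_ge (n m : nat) : (m <= n)%N ->
  \sum_(i < n) (if (i < m)%N then 0 else 1 : int) = (n - m)%N%:Z.
Proof.
move=> mn.
rewrite (eq_bigr (fun i : 'I_n => if i \in [set i : 'I_n | (m <= i)%N] then 1 else 0)); last first.
  by move=> i _; rewrite inE; case: ltnP.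
rewrite -big_mkcond /=.
by rewrite sumr_const card_ge // natz.
Qed.

Lemma Pop3 (K : fieldType) (n : nat) (V : lmodType K) (X D : 'I_n -> V -> V) m J v :
  (m <= n)%N ->
  (forall i, lin (X i)) -> (forall i, lin (D i)) ->
  (forall i j v, D i (X j v) - X j (D i v) = (i == j)%:R *: v) ->
  Pop (fun i => if (i < m)%N then X i else D i) (fun i => if (i < m)%N then D i else X i)
    [set: 'I_n] J v =
  euler X D n v + (\sum_(i in J) (if (i < m)%N then 1 else -1 : int) + (n - m)%N%:Z)%:~R *: v.
Proof.
move=> mn lX lD DX; rewrite /Pop setTD setIT.
have e1 : forall i : 'I_n, (if (i < m)%N then X i else D i) ((if (i < m)%N then D i else X i) v)
    = X i (D i v) + (if (i < m)%N then 0 else 1 : int)%:~R *: v.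
  by move=> i; case: ifP => _; rewrite ?scale0r ?addr0 ?scale1r ?(DXii _ _ DX).
have e2 : forall i : 'I_n, (if (i < m)%N then D i else X i) ((if (i < m)%N then X i else D i) v)
    = X i (D i v) + (if (i < m)%N then 1 else 0 : int)%:~R *: v.
  by move=> i; case: ifP => _; rewrite ?scale0r ?addr0 ?scale1r ?(DXii _ _ DX).
rewrite (eq_bigr _ (fun i _ => e1 i)) (eq_bigr _ (fun i _ => e2 i)) !big_split /=.
rewrite addrACA; congr (_ + _).
  rewrite euler_all [RHS](bigID (fun i => i \in J)) /= addrC; congr (_ + _).
  by apply: eq_bigl => i; rewrite inE.
rewrite -!scaler_suml -scalerDl; congr (_ *: v).
rewrite -!intr_sum -intrD; congr (_%:~R).
rewrite -sum_ge // [X in _ = _ + X](bigID (fun i => i \in J)) /=.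
rewrite addrA -big_split /= addrC; congr (_ + _).
  by apply: eq_bigl => i; rewrite inE.
by apply: eq_bigr => i _; case: ifP.
Qed.

Lemma iter_mono (K : fieldType) (V : lmodType K) (T : V -> V) v a b :
  lin T -> iter a T v = 0 -> (a <= b)%N -> iter b T v = 0.
Proof. by move=> lT H ab; rewrite -(subnK ab) iterD H iter0. Qed.

Lemma unif_nil (K : fieldType) (n : nat) (V : lmodType K) (T : {set 'I_n} -> V -> V)
  (f : {set 'I_n} -> V) :
  (forall I, lin (T I)) -> (forall I, exists a, iter a (T I) (f I) = 0) ->
  exists A, forall I, iter A (T I) (f I) = 0.
Proof.
move=> lT H.
suff [A HA] : exists A, forall I, I \in enum [set: {set 'I_n}] -> iter A (T I) (f I) = 0.
  by exists A => I; apply: HA; rewrite mem_enum inE.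
elim: (enum _) => [|I s [A HA]]; first by exists 0%N.
have [a Ha] := H I; exists (maxn a A) => J; rewrite inE => /orP [/eqP -> | Js].
  exact: (iter_mono (lT I) Ha (leq_maxl _ _)).
exact: (iter_mono (lT J) (HA J Js) (leq_maxr _ _)).
Qed.

Lemma iter_scal (K : fieldType) (V : lmodType K) (c : K) k (v : V) :
  iter k (fun w => c *: w) v = c ^+ k *: v.
Proof. by elim: k => [|k IH] /=; rewrite ?scale1r // IH scalerA exprS. Qed.

Lemma intr_neq0 (K : fieldType) (c : int) : [pchar K] =i pred0 -> c != 0 -> (c%:~R : K) != 0.
Proof.
move=> ch; have h := (pcharf0P K).1 ch.
case: c => k nz.
  by rewrite -pmulrn h; apply: contra nz => /eqP ->.
by rewrite NegzE intrN oppr_eq0 -pmulrn h.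
Qed.

Lemma com_XD (K : fieldType) (n : nat) (V : lmodType K) (X D : 'I_n -> V -> V) i j v :
  (forall i j v, D i (X j v) - X j (D i v) = (i == j)%:R *: v) -> i != j ->
  X j (D i v) = D i (X j v).
Proof.
move=> DX ij; have := DX i j v; rewrite (negbTE ij) scale0r => /eqP.
by rewrite subr_eq0 eq_sym => /eqP.
Qed.

Lemma card_in (n : nat) (J S : {set 'I_n}) : J \subset S -> (#|J| + #|S :\: J|)%N = #|S|.
Proof. by move=> JS; rewrite -(cardsID J S) (setIidPr JS). Qed.

Lemma part1 (K : fieldType) (n : nat) (V : lmodType K)
    (hom : int -> pred V) (X D : 'I_n -> V -> V) (r : nat) :
  (forall i, lin (X i)) -> (forall i, lin (D i)) ->
  (forall i j v, X i (X j v) = X j (X i v)) ->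
  (forall i j v, D i (D j v) = D j (D i v)) ->
  (forall i j v, D i (X j v) - X j (D i v) = (i == j)%:R *: v) ->
  gen_eulerian hom X D ->
  (1 <= r <= n)%N ->
  koszul_gen_eulerian hom D (fun _ => -1)
        [set i : 'I_n | (r.-1 <= i)%N] (euler X D r.-1) (n%:Z - r%:Z + 1).
Proof.
move=> lX lD XX DD DX ge /andP [r1 rn] nu d f cf hf.
set m := r.-1; set S := [set i : 'I_n | (m <= i)%N].
have rm : r = m.+1 by rewrite /m prednK.
have mn : (m <= n)%N by move: rn; rewrite rm => /ltnW.
set N := fun (J : {set 'I_n}) (w : V) =>
  euler X D n w - (d - \sum_(i in J) (fun _ => (-1 : int)) i)%:~R *: w.
set T := fun (_ : {set 'I_n}) (w : V) => euler X D m w - (d + (n%:Z - r%:Z + 1))%:~R *: w.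
have lE := euler_lin n lX lD.
have cN : chainmap D S N.
  apply: chain_N => // i v _; rewrite (euler_D _ _ _ lX lD DD DX) ltn_ord scale1r.
  by rewrite intrN scaleN1r.
have cT : chainmap D S T.
  apply: chain_T => //; first exact: euler_lin.
  move=> i v; rewrite inE => mi; rewrite (euler_D _ _ _ lX lD DD DX) ltnNge mi /=.
  by rewrite scale0r subr0.
have com : forall i j v, i \in S -> j \in S -> i != j -> X i (D j v) = D j (X i v).
  by move=> i j v _ _ ij; apply: (@com_XD K n V X D j i v DX); rewrite eq_sym.
have hTN : forall (J : {set 'I_n}) v, J \subset S -> (#|J| + nu = #|S|)%N ->
    T J v = N J v - Pop D X S J v.
  move=> J v JS _; rewrite Pop1 // /T /N.
  have hc := card_in JS; rewrite card_ge // in hc.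
  rewrite (_ : d + (n%:Z - r%:Z + 1) = (d - \sum_(i in J) (-1 : int)) + (#|S :\: J|)%:Z).
    by rewrite intrD -pmulrn scalerDl; apply: alg1.
  rewrite sumr_const mulNrn natz; move: hc; move: (#|J|) (#|S :\: J|) => a b hc; clear -hc rm mn; lia.
have nil : forall I, exists a, iter a (N I) (f I) = 0.
  by move=> I; have [a [_ h]] := ge _ _ (hf I); exists a.
have [A HA] := unif_nil (T := N) (f := f) (fun I => lin_sub_scal _ lE) nil.
have hk := key lD lX com cN cT hTN cf A.+1.
exists A.+1; split => //; apply: (bnd_ext _ hk) => I.
by rewrite (iter_mono (lin_sub_scal _ lE) (HA I) (leqnSn A)) subr0.
Qed.

Lemma part2 (K : fieldType) (n : nat) (V : lmodType K)
    (hom : int -> pred V) (X D : 'I_n -> V -> V) (r : nat) :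
  (forall i, lin (X i)) -> (forall i, lin (D i)) ->
  (forall i j v, X i (X j v) = X j (X i v)) ->
  (forall i j v, D i (D j v) = D j (D i v)) ->
  (forall i j v, D i (X j v) - X j (D i v) = (i == j)%:R *: v) ->
  gen_eulerian hom X D ->
  (1 <= r <= n)%N ->
  koszul_gen_eulerian hom X (fun _ => 1)
        [set i : 'I_n | (r.-1 <= i)%N] (euler X D r.-1) 0.
Proof.
move=> lX lD XX DD DX ge /andP [r1 rn] nu d f cf hf.
set m := r.-1; set S := [set i : 'I_n | (m <= i)%N].
have rm : r = m.+1 by rewrite /m prednK.
have mn : (m <= n)%N by move: rn; rewrite rm => /ltnW.
set N := fun (J : {set 'I_n}) (w : V) =>
  euler X D n w - (d - \sum_(i in J) (fun _ => (1 : int)) i)%:~R *: w.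
set T := fun (_ : {set 'I_n}) (w : V) => euler X D m w - (d + 0)%:~R *: w.
have lE := euler_lin n lX lD.
have cN : chainmap X S N.
  by apply: chain_N => // i v _; rewrite (euler_X _ _ _ lX lD XX DX) ltn_ord.
have cT : chainmap X S T.
  apply: chain_T => //; first exact: euler_lin.
  move=> i v; rewrite inE => mi; rewrite (euler_X _ _ _ lX lD XX DX) ltnNge mi /=.
  by rewrite scale0r addr0.
have com : forall i j v, i \in S -> j \in S -> i != j -> D i (X j v) = X j (D i v).
  by move=> i j v _ _ ij; rewrite (@com_XD K n V X D i j v DX).
have hTN : forall (J : {set 'I_n}) v, J \subset S -> (#|J| + nu = #|S|)%N ->
    T J v = N J v - Pop X D S J v.
  move=> J v JS _; rewrite Pop2 // /T /N.
  rewrite (_ : d + 0 = (d - \sum_(i in J) (1 : int)) + (#|J :&: S|)%:Z).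
    by rewrite intrD -pmulrn scalerDl; apply: alg1.
  rewrite sumr_const natz (setIidPl JS); lia.
have nil : forall I, exists a, iter a (N I) (f I) = 0.
  by move=> I; have [a [_ h]] := ge _ _ (hf I); exists a.
have [A HA] := unif_nil (T := N) (f := f) (fun I => lin_sub_scal _ lE) nil.
have hk := key lX lD com cN cT hTN cf A.+1.
exists A.+1; split => //; apply: (bnd_ext _ hk) => I.
by rewrite (iter_mono (lin_sub_scal _ lE) (HA I) (leqnSn A)) subr0.
Qed.

Lemma alg2 (V : zmodType) (a x y : V) : - (x + y) = a - x - (a + y).
Proof. by rewrite !opprD addrACA addrN add0r. Qed.

Lemma part3 (K : fieldType) (n : nat) (V : lmodType K)
    (hom : int -> pred V) (X D : 'I_n -> V -> V) (r : nat) :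
  [pchar K] =i pred0 ->
  (forall i, lin (X i)) -> (forall i, lin (D i)) ->
  (forall i j v, X i (X j v) = X j (X i v)) ->
  (forall i j v, D i (D j v) = D j (D i v)) ->
  (forall i j v, D i (X j v) - X j (D i v) = (i == j)%:R *: v) ->
  gen_eulerian hom X D ->
  (1 <= r <= n)%N ->
  koszul_concentrated hom
        (fun i => if (i < r.-1)%N then X i else D i)
        (fun i => if (i < r.-1)%N then 1 else -1)
        [set: 'I_n] (- n%:Z + r%:Z - 1).
Proof.
move=> ch lX lD XX DD DX ge /andP [r1 rn] nu d f cf hf dd0.
set m := r.-1.
have rm : r = m.+1 by rewrite /m prednK.
have mn : (m <= n)%N by move: rn; rewrite rm => /ltnW.
set u := fun i : 'I_n => if (i < m)%N then X i else D i.
set w := fun i : 'I_n => if (i < m)%N then D i else X i.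
set du := fun i : 'I_n => if (i < m)%N then (1 : int) else -1.
set c := d + (n%:Z - r%:Z + 1).
have cnz : c != 0.
  by apply: contra dd0 => /eqP h; apply/eqP; rewrite /c in h; lia.
set N := fun (J : {set 'I_n}) (v : V) =>
  euler X D n v - (d - \sum_(i in J) du i)%:~R *: v.
set T := fun (_ : {set 'I_n}) (v : V) => (- (c%:~R : K)) *: v.
have lE := euler_lin n lX lD.
have lu : forall i, lin (u i) by move=> i; rewrite /u; case: ifP.
have lw : forall i, lin (w i) by move=> i; rewrite /w; case: ifP.
have cN : chainmap u [set: 'I_n] N.
  apply: chain_N => // i v _; rewrite /u /du; case: ifP => _.
    by rewrite (euler_X _ _ _ lX lD XX DX) ltn_ord.
  by rewrite (euler_D _ _ _ lX lD DD DX) ltn_ord scale1r intrN scaleN1r.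
have cT : chainmap u [set: 'I_n] T by apply: chain_scal.
have com : forall i j v, i \in [set: 'I_n] -> j \in [set: 'I_n] -> i != j ->
    w i (u j v) = u j (w i v).
  move=> i j v _ _ ij; rewrite /u /w.
  have ji : j != i by rewrite eq_sym.
  case: ifP => _; case: ifP => _.
  - by rewrite (@com_XD K n V X D i j v DX ij).
  - by rewrite DD.
  - by rewrite XX.
  - by rewrite (@com_XD K n V X D j i v DX ji).
have hTN : forall (J : {set 'I_n}) v, J \subset [set: 'I_n] -> (#|J| + nu = #|[set: 'I_n]|)%N ->
    T J v = N J v - Pop u w [set: 'I_n] J v.
  move=> J v _ _; rewrite /u /w Pop3 // /T /N /du.
  set s := \sum_(i in J) _.
  rewrite (_ : c = (d - s) + (s + (n - m)%N%:Z)).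
    by rewrite intrD scaleNr scalerDl; apply: alg2.
  rewrite /c; lia.
have nil : forall I, exists a, iter a (N I) (f I) = 0.
  by move=> I; have [a [_ h]] := ge _ _ (hf I); exists a.
have [A HA] := unif_nil (T := N) (f := f) (fun I => lin_sub_scal _ lE) nil.
have hk := key lu lw com cN cT hTN cf A.
have h2 := bnd_lin ((- (c%:~R : K)) ^+ A)^-1 lu hk (bnd0 [set: 'I_n] nu lu).
apply: (bnd_ext _ h2) => I.
rewrite (HA I) subr0 addr0 /T iter_scal scalerA mulVf ?scale1r //.
by rewrite expf_neq0 // oppr_eq0 intr_neq0.
Qed.

Unset Implicit Arguments.

Theorem theorem1p4 (K : fieldType) (n : nat) (V : lmodType K)
    (hom : int -> pred V) (X D : 'I_n -> V -> V) (r : nat) :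
  [pchar K] =i pred0 ->
  graded_weyl_module hom X D ->
  gen_eulerian hom X D ->
  (1 <= r <= n)%N ->
  [/\ koszul_gen_eulerian hom D (fun _ => -1)
        [set i : 'I_n | (r.-1 <= i)%N] (euler X D r.-1) (n%:Z - r%:Z + 1),
      koszul_gen_eulerian hom X (fun _ => 1)
        [set i : 'I_n | (r.-1 <= i)%N] (euler X D r.-1) 0 &
      koszul_concentrated hom
        (fun i => if (i < r.-1)%N then X i else D i)
        (fun i => if (i < r.-1)%N then 1 else -1)
        [set: 'I_n] (- n%:Z + r%:Z - 1)].
Proof.
move=> ch [_ [lX [lD [XX [DD [DX _]]]]]] ge hr.
split.
- exact: (part1 lX lD XX DD DX ge hr).
- exact: (part2 lX lD XX DD DX ge hr).
- exact: (part3 ch lX lD XX DD DX ge hr).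
Qed.
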